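(* Let $\mathcal{H}$ be a finite-dimensional Hilbert space, $\tau$ a quantum channel on $\mathcal{H}$ (extended linearly to all operators on $\mathcal{H}$), and let $\Theta\neq0$ be an operator on $\mathcal{H}$ with $\tau(\Theta)=\lambda\Theta$ for some $\lambda$ with $|\lambda|=1$. Let $g=\mathrm{Tr}\sqrt{\Theta^{\dagger}\Theta}>0$. Then the density matrices $\rho=\sqrt{\Theta\Theta^{\dagger}}/g$ and $\sigma=\sqrt{\Theta^{\dagger}\Theta}/g$ are fixed points of $\tau$.
   Context: A quantum channel is a linear, completely positive, trace-preserving map on the space of linear operators on $\mathcal{H}$. *)

(* Defs.v *)
From HB Require Import structures.
From mathcomp Require Import all_boot all_order all_algebra all_field.
Set Implicit Arguments. Unset Strict Implicit. Unset Printing Implicit Defensive.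
Import Order.TTheory GRing.Theory Num.Theory.
Local Open Scope ring_scope.

(* Operators on the n-dimensional Hilbert space C^n are n x n complex matrices. *)

Definition adj {m p : nat} (A : 'M[algC]_(m, p)) : 'M[algC]_(p, m) :=
  (map_mx Num.conj A)^T.

(* Positive semidefinite: <x, A x> >= 0 for all vectors x (in algC, 0 <= z
   means z is real and nonnegative). *)
Definition psd {n : nat} (A : 'M[algC]_n) : Prop :=
  forall x : 'cV[algC]_n, 0 <= (adj x *m A *m x) 0 0.

(* An element of M_m(C) (x) M_n(C) ~= M_m(M_n(C)), given as an m x m block matrix
   of n x n blocks, is positive semidefinite. *)
Definition block_psd {n m : nat} (A : 'I_m -> 'I_m -> 'M[algC]_n) : Prop :=
  forall x : 'I_m -> 'cV[algC]_n,
    0 <= \sum_(i < m) \sum_(j < m) (adj (x i) *m A i j *m x j) 0 0.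

(* Complete positivity: id_m (x) T is positive for every m. *)
Definition completely_positive {n : nat} (T : 'M[algC]_n -> 'M[algC]_n) : Prop :=
  forall (m : nat) (A : 'I_m -> 'I_m -> 'M[algC]_n),
    block_psd A -> block_psd (fun i j => T (A i j)).

Definition trace_preserving {n : nat} (T : 'M[algC]_n -> 'M[algC]_n) : Prop :=
  forall A : 'M[algC]_n, \tr (T A) = \tr A.

Definition quantum_channel {n : nat} (T : {linear 'M[algC]_n -> 'M[algC]_n}) : Prop :=
  completely_positive T /\ trace_preserving T.

Definition is_psd_sqrt {n : nat} (B A : 'M[algC]_n) : Prop :=
  psd B /\ B *m B = A.

(* Main.v *)
Require Import Defs.
From HB Require Import structures.
From mathcomp Require Import all_boot all_order all_algebra all_field.
From mathcomp Require Import ring spectral.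
Import Order.TTheory GRing.Theory Num.Theory.
Local Open Scope ring_scope.
Set Implicit Arguments. Unset Strict Implicit. Unset Printing Implicit Defensive.

Section Adj.
Implicit Types (a : algC).

Lemma adjE m p (A : 'M[algC]_(m, p)) i j : adj A i j = (A j i)^*.
Proof. by rewrite /adj !mxE. Qed.

Lemma adjK m p (A : 'M[algC]_(m, p)) : adj (adj A) = A.
Proof. by apply/matrixP=> i j; rewrite !adjE conjCK. Qed.

Lemma adjM m p q (A : 'M[algC]_(m, p)) (B : 'M[algC]_(p, q)) :
  adj (A *m B) = adj B *m adj A.
Proof.
apply/matrixP=> i j; rewrite /adj !mxE rmorph_sum; apply: eq_bigr => k _.
by rewrite !mxE rmorphM mulrC.
Qed.

Lemma adjD m p (A B : 'M[algC]_(m, p)) : adj (A + B) = adj A + adj B.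
Proof. by apply/matrixP=> i j; rewrite /adj !mxE rmorphD. Qed.

Lemma adjN m p (A : 'M[algC]_(m, p)) : adj (- A) = - adj A.
Proof. by apply/matrixP=> i j; rewrite /adj !mxE rmorphN. Qed.

Lemma adjB m p (A B : 'M[algC]_(m, p)) : adj (A - B) = adj A - adj B.
Proof. by rewrite adjD adjN. Qed.

Lemma adjZ m p a (A : 'M[algC]_(m, p)) : adj (a *: A) = a^* *: adj A.
Proof. by apply/matrixP=> i j; rewrite /adj !mxE rmorphM. Qed.

Lemma adj0 m p : adj (0 : 'M[algC]_(m, p)) = 0.
Proof. by apply/matrixP=> i j; rewrite /adj !mxE conjC0. Qed.

Lemma adj1 m : adj (1%:M : 'M[algC]_m) = 1%:M.
Proof. by apply/matrixP=> i j; rewrite /adj !mxE eq_sym; case: (i == j); rewrite /= ?conjC1 ?conjC0. Qed.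

Lemma adj_diag m (d : 'rV[algC]_m) : adj (diag_mx d) = diag_mx (map_mx Num.conj d).
Proof.
apply/matrixP=> i j; rewrite /adj !mxE eq_sym; case: eqP => [->|_] //=.
by rewrite !mulr0n conjC0.
Qed.

Lemma adj_col m1 m2 p (A : 'M[algC]_(m1, p)) (B : 'M[algC]_(m2, p)) :
  adj (col_mx A B) = row_mx (adj A) (adj B).
Proof. by rewrite /adj map_col_mx tr_col_mx. Qed.

Lemma adj_block m1 m2 n1 n2 (A : 'M[algC]_(m1, n1)) (B : 'M[algC]_(m1, n2))
  (C : 'M[algC]_(m2, n1)) (D : 'M[algC]_(m2, n2)) :
  adj (block_mx A B C D) = block_mx (adj A) (adj C) (adj B) (adj D).
Proof. by rewrite /adj map_block_mx tr_block_mx. Qed.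

Lemma adj11 (A : 'M[algC]_1) : adj A 0 0 = (A 0 0)^*.
Proof. by rewrite adjE. Qed.

End Adj.

Section Bil.
Definition bil k (x : 'cV[algC]_k) (K : 'M[algC]_k) (y : 'cV[algC]_k) : algC :=
  (adj x *m K *m y) 0 0.

Variable k : nat.
Implicit Types (x y z w : 'cV[algC]_k) (K L : 'M[algC]_k) (a : algC).

Lemma bil_conj x K y : (bil x K y)^* = bil y (adj K) x.
Proof. by rewrite /bil -adj11 !adjM adjK mulmxA. Qed.

Lemma bilDl x y K z : bil (x + y) K z = bil x K z + bil y K z.
Proof. by rewrite /bil adjD !mulmxDl mxE. Qed.
Lemma bilDr x K y z : bil x K (y + z) = bil x K y + bil x K z.
Proof. by rewrite /bil !mulmxDr mxE. Qed.
Lemma bilDm x K L y : bil x (K + L) y = bil x K y + bil x L y.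
Proof. by rewrite /bil mulmxDr mulmxDl mxE. Qed.
Lemma bilNm x K y : bil x (- K) y = - bil x K y.
Proof. by rewrite /bil mulmxN mulNmx mxE. Qed.
Lemma bilBm x K L y : bil x (K - L) y = bil x K y - bil x L y.
Proof. by rewrite bilDm bilNm. Qed.
Lemma bilZl a x K y : bil (a *: x) K y = a^* * bil x K y.
Proof. by rewrite /bil adjZ -!scalemxAl mxE. Qed.
Lemma bilZr a x K y : bil x K (a *: y) = a * bil x K y.
Proof. by rewrite /bil -!scalemxAr mxE. Qed.
Lemma bilZm a x K y : bil x (a *: K) y = a * bil x K y.
Proof. by rewrite /bil -scalemxAr -scalemxAl mxE. Qed.
Lemma bil_mulr x K (M : 'M[algC]_k) y : bil x K (M *m y) = bil x (K *m M) y.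
Proof. by rewrite /bil !mulmxA. Qed.
Lemma bil_mull x K (M : 'M[algC]_k) y : bil (M *m x) K y = bil x (adj M *m K) y.
Proof. by rewrite /bil adjM !mulmxA. Qed.
Lemma bil0l K y : bil 0 K y = 0.
Proof. by rewrite /bil adj0 !mul0mx mxE. Qed.
Lemma bil0r x K : bil x K 0 = 0.
Proof. by rewrite /bil mulmx0 mxE. Qed.

Lemma dotE (v w : 'cV[algC]_k) : (adj v *m w) 0 0 = \sum_i (v i 0)^* * w i 0.
Proof. by rewrite mxE; apply: eq_bigr => i _; rewrite /adj !mxE. Qed.

Lemma dot_ge0 (v : 'cV[algC]_k) : 0 <= (adj v *m v) 0 0.
Proof. by rewrite dotE; apply: sumr_ge0 => i _; rewrite mulrC mul_conjC_ge0. Qed.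

Lemma dot_eq0 (v : 'cV[algC]_k) : (adj v *m v) 0 0 = 0 -> v = 0.
Proof.
rewrite dotE => /psumr_eq0P H; apply/matrixP => i j; rewrite (ord1 j) mxE.
have hge : forall i0 : 'I_k, true -> 0 <= (v i0 0)^* * v i0 0.
  by move=> i0 _; rewrite mulrC mul_conjC_ge0.
have /eqP := H hge i isT.
by rewrite mulrC -normCK sqrf_eq0 normr_eq0 => /eqP.
Qed.

Definition ev (i : 'I_k) : 'cV[algC]_k := delta_mx i 0.

Lemma mul_ev m (M : 'M[algC]_(m, k)) i j : (M *m ev j) i 0 = M i j.
Proof. by rewrite -colE mxE. Qed.

Lemma bil_ev K i j : bil (ev i) K (ev j) = K i j.
Proof.
rewrite /bil -mulmxA dotE (bigD1 i) //= big1 ?addr0.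
  by rewrite mul_ev !mxE !eqxx conjC1 mul1r.
by move=> l /negbTE nli; rewrite !mxE nli conjC0 mul0r.
Qed.

Lemma form0 K : (forall x, bil x K x = 0) -> K = 0.
Proof.
move=> H; apply/matrixP => i j; rewrite mxE.
have Hii := H (ev i); have Hjj := H (ev j).
have H1 := H (ev i + ev j); have H2 := H (ev i + 'i *: ev j).
rewrite !bil_ev in Hii Hjj.
rewrite !(bilDl, bilDr, bilZl, bilZr, bil_ev, Hii, Hjj) in H1 H2.
rewrite conjCi in H2.
have e1 : K j i = - K i j.
  by apply/eqP; rewrite -subr_eq0 opprK addrC; apply/eqP; rewrite -H1; ring.
rewrite e1 in H2.
have : ('i *+ 2) * K i j = 0 by rewrite -H2; ring.
by move/eqP; rewrite mulf_eq0 mulrn_eq0 /= (negbTE (neq0Ci _)) => /eqP.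
Qed.
End Bil.

Section Psd.
Variable k : nat.
Implicit Types (x y z w : 'cV[algC]_k) (K L : 'M[algC]_k) (a : algC).

Lemma bil_evl K i y : bil (ev i) K y = (K *m y) i 0.
Proof.
rewrite /bil -mulmxA dotE (bigD1 i) //= big1 ?addr0.
  by rewrite !mxE !eqxx conjC1 mul1r.
by move=> l /negbTE nli; rewrite !mxE nli conjC0 mul0r.
Qed.

Lemma psd_real K x : psd K -> (bil x K x)^* = bil x K x.
Proof. by move=> pK; rewrite geC0_conj //; apply: pK. Qed.

Lemma psd_adj K : psd K -> adj K = K.
Proof.
move=> pK; apply/eqP; rewrite -subr_eq0; apply/eqP; apply: form0 => x.
by rewrite bilBm -bil_conj psd_real // subrr.
Qed.

Lemma psd_kernel K z : psd K -> bil z K z = 0 -> K *m z = 0.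
Proof.
move=> pK hz; have aK := psd_adj pK.
apply/matrixP => i j; rewrite (ord1 j) [in RHS]mxE.
set g := (K *m z) i 0.
have eg : bil (ev i) K z = g by rewrite bil_evl.
have eg' : bil z K (ev i) = g^* by rewrite -eg bil_conj aK.
set c := bil (ev i) K (ev i).
have c0 : 0 <= c by apply: pK.
have c1 : 0 < c + 1 by rewrite ltr_wpDl // ltr01.
set s := (c + 1)^-1.
have s0 : 0 < s by rewrite invr_gt0.
have sc : s^* = s by rewrite geC0_conj // ltW.
set t := - (s * g).
have := pK (z + t *: ev i).
rewrite -/(bil _ _ _) !(bilDl, bilDr, bilZl, bilZr, hz, eg, eg') -/c.
have tc : t^* = - (s * g^*).
  by rewrite /t rmorphN rmorphM; congr (- (_ * _)); exact: sc.
rewrite tc.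
have c1n : c + 1 != 0 by rewrite gt_eqF.
have -> : 0 + t * g^* + (- (s * g^*) * g + - (s * g^*) * (t * c)) =
         - (s * s * (g * g^*) * (c + 2)).
  have hs : s * (c + 1) = 1 by rewrite mulVf.
  apply/eqP; rewrite -subr_eq0; apply/eqP.
  transitivity ((s *+ 2) * (g * g^*) * (s * (c + 1) - 1)); first by rewrite /t; ring.
  by rewrite hs subrr mulr0.
rewrite oppr_ge0 => hle.
have hge : 0 <= s * s * (g * g^*) * (c + 2).
  apply: mulr_ge0; last by apply: addr_ge0.
  apply: mulr_ge0; last exact: mul_conjC_ge0.
  by apply: mulr_ge0; apply: ltW.
have /eqP := le_anti (introT andP (conj hle hge)).
rewrite !mulf_eq0 (gt_eqF s0) /=.
have -> : (c + 2 == 0) = false by rewrite gt_eqF // ltr_wpDl // ltr0n.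
by rewrite orbF conjC_eq0 orbb => /eqP.
Qed.

Lemma mx_ext_mul m (A B : 'M[algC]_(m, k)) : (forall x, A *m x = B *m x) -> A = B.
Proof.
by move=> H; apply/matrixP => i j; rewrite -(mul_ev A) -(mul_ev B) H.
Qed.

Lemma psd_tr_ge0 K : psd K -> 0 <= \tr K.
Proof.
by move=> pK; rewrite /mxtrace; apply: sumr_ge0 => i _; rewrite -bil_ev; apply: pK.
Qed.

Lemma psd_tr0 K : psd K -> \tr K = 0 -> K = 0.
Proof.
move=> pK /psumr_eq0P H.
have H2 : forall i, K i i = 0.
  by move=> i; apply: H => // i0 _; rewrite -bil_ev; apply: pK.
have H3 : forall i, K *m ev i = 0.
  by move=> i; apply: psd_kernel => //; rewrite bil_ev H2.
by apply/matrixP => i j; rewrite [in RHS]mxE -mul_ev H3 mxE.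
Qed.
End Psd.

Section Psd2.
Variable k : nat.
Implicit Types (x y z w : 'cV[algC]_k) (K L X W : 'M[algC]_k).

Lemma psd_congr K W : psd K -> psd (adj W *m K *m W).
Proof. by move=> pK x; rewrite -/(bil _ _ _) -bil_mulr -bil_mull; apply: pK. Qed.

Lemma psd_AtA X : psd (adj X *m X).
Proof. by move=> x; rewrite mulmxA -adjM -mulmxA; apply: dot_ge0. Qed.

Lemma AtA0 X : adj X *m X = 0 -> X = 0.
Proof.
move=> H; apply: mx_ext_mul => x; rewrite mul0mx; apply: dot_eq0.
by rewrite adjM -mulmxA (mulmxA (adj X)) H mul0mx mulmx0 mxE.
Qed.
End Psd2.

Lemma gram_block_psd n m (Y : 'I_m -> 'M[algC]_n) :
  block_psd (fun i j => adj (Y i) *m Y j).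
Proof.
move=> x; set v := \sum_(j < m) Y j *m x j.
have -> : \sum_(i < m) \sum_(j < m) (adj (x i) *m (adj (Y i) *m Y j) *m x j) 0 0
   = (adj v *m v) 0 0.
  rewrite /v dotE.
  under eq_bigr => i _ do under eq_bigr => j _ do
    rewrite !mulmxA -adjM -mulmxA dotE.
  under [in RHS]eq_bigr => l _ do rewrite !summxE rmorph_sum mulr_suml.
  under [in RHS]eq_bigr => l _ do under eq_bigr => i _ do rewrite mulr_sumr.
  rewrite [RHS]exchange_big /=; apply: eq_bigr => i _.
  by rewrite exchange_big.
exact: dot_ge0.
Qed.

Lemma bil_block n (x0 x1 y0 y1 : 'cV[algC]_n) (A B C D : 'M[algC]_n) :
  bil (col_mx x0 x1) (block_mx A B C D) (col_mx y0 y1) =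
  bil x0 A y0 + bil x0 B y1 + bil x1 C y0 + bil x1 D y1.
Proof.
rewrite /bil adj_col mul_row_block mul_row_col !mulmxDl !mxE.
by rewrite !addrA; congr (_ + _); rewrite -!addrA; congr (_ + _); rewrite addrC.
Qed.

Lemma cp_block n (tau : 'M[algC]_n -> 'M[algC]_n) (Y1 Y2 : 'M[algC]_n) :
  completely_positive tau ->
  psd (block_mx (tau (adj Y1 *m Y1)) (tau (adj Y1 *m Y2))
                (tau (adj Y2 *m Y1)) (tau (adj Y2 *m Y2))).
Proof.
move=> cp z; rewrite -(vsubmxK z) -/(bil _ _ _) bil_block.
set x0 := usubmx z; set x1 := dsubmx z.
pose Y (i : 'I_2) := if i == ord0 then Y1 else Y2.
pose x (i : 'I_2) := if i == ord0 then x0 else x1.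
have := cp 2 _ (gram_block_psd Y) x.
rewrite !big_ord_recl !big_ord0 /=.
by rewrite !addr0 !addrA.
Qed.

Lemma mxtrN k (A : 'M[algC]_k) : \tr (- A) = - \tr A.
Proof. by rewrite /mxtrace -sumrN; apply: eq_bigr => i _; rewrite mxE. Qed.
Lemma mxtrB k (A B : 'M[algC]_k) : \tr (A - B) = \tr A - \tr B.
Proof. by rewrite mxtraceD mxtrN. Qed.

Lemma key n (tau : {linear 'M[algC]_n -> 'M[algC]_n}) (Th : 'M[algC]_n) (l : algC)
  (Y1 Y2 V : 'M[algC]_n) :
  quantum_channel tau -> tau Th = l *: Th -> `|l| = 1 ->
  adj Y1 *m Y2 = Th ->
  \tr (adj Y2 *m Y2) = \tr (adj Y1 *m Y1) ->
  Th *m adj V = adj Y1 *m Y1 ->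
  (adj V *m V) *m (adj V *m V) = adj V *m V ->
  tau (adj Y1 *m Y1) = adj Y1 *m Y1 /\ tau (adj Th) = l^* *: adj Th.
Proof.
move=> [cp tp] hT hl hY htr hV hPi.
have pN := cp_block Y1 Y2 cp.
have eYT : adj Y2 *m Y1 = adj Th by rewrite -hY adjM adjK.
rewrite hY eYT hT in pN.
set P1 := adj Y1 *m Y1 in hV htr pN *; set Q1 := adj Y2 *m Y2 in htr pN *.
set A := tau P1 in pN *; set B := tau Q1 in pN *; set C := tau (adj Th) in pN *.
have hC : C = l^* *: adj Th.
  have aN := psd_adj pN; rewrite adj_block in aN.
  by case/eq_block_mx: aN => _ _ <- _; rewrite adjZ.
split; last exact: hC.
have pB : psd B.
  move=> x; have := pN (col_mx 0 x); rewrite -/(bil _ _ _) bil_block.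
  by rewrite !(bil0l, bil0r) !add0r.
have aP1 : adj P1 = P1 by rewrite /P1 adjM adjK.
have hll : l * l^* = 1 by rewrite -normCK hl expr1n.
have trA : \tr A = \tr P1 by apply: tp.
have trB : \tr B = \tr P1 by rewrite -htr; apply: tp.
set K := A + V *m B *m adj V - P1 - P1.
set c := - l^*.
pose z (x : 'cV[algC]_n) := col_mx x (c *: (adj V *m x)).
have hK : forall x, bil x K x = bil (z x) (block_mx A (l *: Th) C B) (z x).
  move=> x; rewrite bil_block hC.
  rewrite !(bilZl, bilZr, bilZm, bil_mull, bil_mulr) !adjK -scalemxAr bilZm.
  have eVT : V *m adj Th = P1 by rewrite -[V]adjK -adjM hV aP1.
  rewrite eVT hV.
  rewrite /K !(bilDm, bilBm, bilNm).
  have cc : c^* = - l by rewrite /c rmorphN; congr (- _); exact: conjCK.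
  rewrite cc /c.
  set a := bil x A x; set p := bil x P1 x; set vb := bil x (V *m B *m adj V) x.
  apply/eqP; rewrite -subr_eq0; apply/eqP.
  move: hll; generalize (l^*) => lc hll.
  transitivity ((1 - l * lc) * (vb - p *+ 2)); first by ring.
  by rewrite hll subrr mul0r.
have pK : psd K by move=> x; rewrite -/(bil _ _ _) hK; apply: pN.
set Pi := adj V *m V in hPi.
set W := 1%:M - Pi.
have aW : adj W = W by rewrite /W adjB adj1 /Pi adjM adjK.
have WW : W *m W = W.
  by rewrite /W mulmxBl !mulmxBr !mul1mx mulmx1 hPi subrr subr0.
have trW : 0 <= \tr (adj W *m B *m W) by apply: psd_tr_ge0; apply: psd_congr.
have tVB : \tr (V *m B *m adj V) = \tr (Pi *m B) by rewrite mxtrace_mulC mulmxA.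
have trK : \tr K = - \tr (adj W *m B *m W).
  rewrite aW mxtrace_mulC mulmxA WW /W mulmxBl mul1mx mxtrB.
  rewrite /K !mxtrB mxtraceD trA trB tVB.
  by rewrite opprB; ring.
have K0 : K = 0.
  apply: psd_tr0 => //; apply: le_anti; rewrite psd_tr_ge0 // andbT trK.
  by rewrite oppr_le0.
apply: mx_ext_mul => x.
have := psd_kernel (z := z x) pN; rewrite -hK K0 /bil mulmx0 mul0mx mxE => /(_ erefl).
rewrite mul_block_col => /(congr1 usubmx); rewrite col_mxKu linear0.
rewrite -scalemxAr -scalemxAl scalerA mulmxA hV /c.
by rewrite mulNr mulrC hll scaleN1r => /eqP; rewrite subr_eq0 => /eqP.
Qed.

Lemma cM (x y : algC) : (x * y)^* = x^* * y^*. Proof. exact: rmorphM. Qed.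
Lemma cB (x y : algC) : (x - y)^* = x^* - y^*. Proof. exact: rmorphB. Qed.
Lemma c1 : (1 : algC)^* = 1. Proof. exact: rmorph1. Qed.

Lemma adj_tstar m p (A : 'M[algC]_(m, p)) : (A ^t* )%sesqui = adj A.
Proof. by apply/matrixP => i j; rewrite /adj !mxE. Qed.

Lemma herm_spectral n (P : 'M[algC]_n) : adj P = P ->
  exists (W : 'M[algC]_n) (d : 'rV[algC]_n),
    [/\ adj W *m W = 1%:M, W *m adj W = 1%:M & P = W *m diag_mx d *m adj W].
Proof.
move=> aP.
have nP : P \is normalmx by apply/normalmxP; rewrite adj_tstar aP.
have := orthomx_spectralP nP; set U := spectralmx P; set d := spectral_diag P.
move=> eP.
have uU := spectral_unitarymx P; rewrite -/U in uU.
have h1 : U *m adj U = 1%:M by rewrite -adj_tstar; apply/unitarymxP.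
exists (adj U), d; rewrite adjK; split => //; first exact: mulmx1C.
by rewrite eP invmx_unitary // adj_tstar.
Qed.

Section Fd.
Variables (n : nat) (W : 'M[algC]_n).
Hypotheses (hW1 : adj W *m W = 1%:M) (hW2 : W *m adj W = 1%:M).

Definition Fd (f : 'I_n -> algC) := W *m diag_mx (\row_k f k) *m adj W.

Lemma diag_mul (f g : 'I_n -> algC) :
  diag_mx (\row_k f k) *m diag_mx (\row_k g k) = diag_mx (\row_k (f k * g k)).
Proof.
apply/matrixP => i j; rewrite mul_diag_mx !mxE.
by case: (i == j); rewrite ?mulr1n ?mulr0n ?mulr0.
Qed.

Lemma FdM f g : Fd f *m Fd g = Fd (fun k => f k * g k).
Proof.
by rewrite /Fd -!mulmxA (mulmxA (adj W)) hW1 mul1mx !mulmxA -(mulmxA W) diag_mul.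
Qed.

Lemma Fd_ext f g : (forall k, f k = g k) -> Fd f = Fd g.
Proof. by move=> H; rewrite /Fd; congr (_ *m diag_mx _ *m _); apply/rowP => k; rewrite !mxE H. Qed.

Lemma Fd_adj f : adj (Fd f) = Fd (fun k => (f k)^*).
Proof.
rewrite /Fd !adjM adjK adj_diag mulmxA; congr (_ *m diag_mx _ *m _).
by apply/rowP => k; rewrite !mxE.
Qed.

Lemma Fd_tr f : \tr (Fd f) = \sum_k f k.
Proof.
rewrite /Fd mxtrace_mulC mulmxA hW1 mul1mx mxtrace_diag.
by apply: eq_bigr => k _; rewrite mxE.
Qed.

Lemma Fd1 : Fd (fun _ => 1) = 1%:M.
Proof.
rewrite /Fd (_ : diag_mx _ = 1%:M) ?mulmx1 //.
by apply/matrixP => i j; rewrite !mxE.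
Qed.

Lemma Fd0 : Fd (fun _ => 0) = 0.
Proof.
rewrite /Fd (_ : diag_mx _ = 0) ?mulmx0 ?mul0mx //.
by apply/matrixP => i j; rewrite !mxE mul0rn.
Qed.

Lemma FdB f g : Fd f - Fd g = Fd (fun k => f k - g k).
Proof.
rewrite /Fd -mulmxBl -mulmxBr; congr (_ *m _ *m _).
by apply/matrixP => i j; rewrite !mxE mulrnBl.
Qed.
End Fd.

Lemma construct n (Th P : 'M[algC]_n) : psd P -> P *m P = Th *m adj Th ->
  exists Y1 Y2 V : 'M[algC]_n, [/\ adj Y1 *m Y2 = Th, adj Y1 *m Y1 = P,
     \tr (adj Y2 *m Y2) = \tr (adj Y1 *m Y1), Th *m adj V = adj Y1 *m Y1 &
     (adj V *m V) *m (adj V *m V) = adj V *m V].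
Proof.
move=> pP hPP.
have [W [d [hW1 hW2 eP]]] := herm_spectral (psd_adj pP).
have d0 : forall k, 0 <= d 0 k.
  move=> k; have := pP (W *m ev k); rewrite -/(bil _ _ _) bil_mull bil_mulr.
  by rewrite eP !mulmxA hW1 mul1mx -mulmxA hW1 mulmx1 bil_ev mxE eqxx mulr1n.
pose s k := sqrtC (d 0 k).
pose t k := (s k)^-1.
have sc : forall k, (s k)^* = s k by move=> k; rewrite geC0_conj // sqrtC_ge0.
have tc : forall k, (t k)^* = t k.
  by move=> k; rewrite geC0_conj // invr_ge0 sqrtC_ge0.
have sts : forall k, s k * t k * s k = s k.
  move=> k; rewrite /t; have [->|nz] := eqVneq (s k) 0; first by rewrite !mul0r.
  by rewrite mulfV // mul1r.
have tst : forall k, t k * s k * t k = t k.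
  move=> k; rewrite /t; have [->|nz] := eqVneq (s k) 0; first by rewrite invr0 !mul0r.
  by rewrite mulVf // mul1r.
have eP' : P = Fd W (fun k => s k * s k).
  rewrite eP /Fd; congr (_ *m diag_mx _ *m _); apply/rowP => k.
  by rewrite mxE -expr2 sqrtCK.
have eG : Th *m adj Th = Fd W (fun k => s k * s k * (s k * s k)).
  by rewrite -hPP eP' FdM.
pose E := Fd W (fun k => s k * t k).
have hE : E *m Th = Th.
  pose Z := Th - E *m Th.
  have hZ : Z = Fd W (fun k => 1 - s k * t k) *m Th.
    by rewrite /Z -FdB // Fd1 // mulmxBl mul1mx.
  have aPr : adj (Fd W (fun k => 1 - s k * t k)) = Fd W (fun k => 1 - s k * t k).
    rewrite Fd_adj //; apply: Fd_ext => k.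
    by rewrite cB c1 cM sc tc.
  have hZZ : Z *m adj Z = 0.
    rewrite hZ adjM aPr mulmxA -(mulmxA _ Th) eG !FdM //.
    rewrite -(Fd0 W); apply: Fd_ext => k.
    transitivity ((s k - s k * t k * s k) * (s k * s k * s k * (1 - s k * t k))); first by ring.
    by rewrite sts subrr mul0r.
  have : adj Z = 0 by apply: AtA0; rewrite adjK.
  by move/(congr1 adj); rewrite adjK adj0 /Z => /eqP; rewrite subr_eq0 => /eqP <-.
exists (Fd W s), (Fd W t *m Th), (Fd W (fun k => t k * t k) *m Th).
have aS : adj (Fd W s) = Fd W s by rewrite Fd_adj //; apply: Fd_ext => k; rewrite sc.
have aT : adj (Fd W t) = Fd W t by rewrite Fd_adj //; apply: Fd_ext => k; rewrite tc.
have aTT : adj (Fd W (fun k => t k * t k)) = Fd W (fun k => t k * t k).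
  by rewrite Fd_adj //; apply: Fd_ext => k; rewrite cM tc.
have e4 : forall k, s k * s k * (s k * s k) * (t k * t k) = s k * s k.
  move=> k; transitivity ((s k * t k * s k) * (s k * t k * s k)); first by ring.
  by rewrite sts.
have hSS : adj (Fd W s) *m Fd W s = P by rewrite aS FdM // eP'.
split.
- by rewrite aS mulmxA FdM.
- exact: hSS.
- rewrite hSS adjM aT mxtrace_mulC mulmxA -(mulmxA _ Th) eG !FdM //.
  rewrite eP' !Fd_tr //; apply: eq_bigr => k _.
  transitivity (s k * s k * (s k * s k) * (t k * t k)); [by ring | exact: e4].
- by rewrite hSS adjM aTT (mulmxA Th) eG FdM // eP'; apply: Fd_ext.
- have key5 : Fd W (fun k => t k * t k) *m Fd W (fun k => t k * t k) *m (Th *m adj Th)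
       *m (Fd W (fun k => t k * t k) *m Fd W (fun k => t k * t k))
     = Fd W (fun k => t k * t k) *m Fd W (fun k => t k * t k).
    rewrite eG !FdM //; apply: Fd_ext => k.
    transitivity ((t k * s k * t k) * (t k * s k * t k) * (t k * s k * t k) * (t k * s k * t k)); first by ring.
    rewrite tst; ring.
  rewrite adjM aTT; move: key5; generalize (Fd W (fun k => t k * t k)) => R key5.
  rewrite !mulmxA in key5.
  transitivity (adj Th *m (R *m R *m Th *m adj Th *m R *m R) *m Th); first by rewrite !mulmxA.
  by rewrite key5 !mulmxA.
Qed.

Unset Implicit Arguments. Set Strict Implicit. Set Printing Implicit Defensive.

Theorem mainTheorem13 (n : nat) (tau : {linear 'M[algC]_n -> 'M[algC]_n})
  (Theta : 'M[algC]_n) (lambda : algC) (P Q : 'M[algC]_n) :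
  quantum_channel tau ->
  Theta != 0 ->
  tau Theta = lambda *: Theta ->
  `|lambda| = 1 ->
  is_psd_sqrt P (Theta *m adj Theta) ->
  is_psd_sqrt Q (adj Theta *m Theta) ->
  let g := \tr Q in
  0 < g /\
  tau (g^-1 *: P) = g^-1 *: P /\
  tau (g^-1 *: Q) = g^-1 *: Q.
Proof.
move=> qc nz hT hl [pP hP] [pQ hQ] g.
have [Y1 [Y2 [V [h1 h2 h3 h4 h5]]]] := construct pP hP.
have [kP kC] := key qc hT hl h1 h3 h4 h5.
rewrite h2 in kP.
have hQ' : Q *m Q = adj Theta *m adj (adj Theta) by rewrite adjK.
have [Z1 [Z2 [V' [i1 i2 i3 i4 i5]]]] := construct pQ hQ'.
have hl' : `|lambda^*| = 1 by rewrite norm_conjC.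
have [kQ _] := key qc kC hl' i1 i3 i4 i5.
rewrite i2 in kQ.
split.
  rewrite lt_def psd_tr_ge0 // andbT; apply/eqP => /(psd_tr0 pQ) Q0.
  move: nz; rewrite -(AtA0 (X := Theta)) ?eqxx // -hQ Q0 mul0mx.
  by [].
by rewrite !linearZ /= kP kQ.
Qed.
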